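(* Let $(V,\sigma,\kappa,\alpha)$ be a symplectic cubic space over $\mathbb F_2$ with basis $b_1,\ldots,b_n$ and structure constants $\sigma_i=\sigma(b_i)$, $\kappa_{ij}=\kappa(b_i,b_j)$, $\alpha_{ijk}=\alpha(b_i,b_j,b_k)$. Let $G$ be the group with generators $g_i,f_i,h_i$ ($1\le i\le n$), $u$, $v$ and defining relations $g_i^2=u^{\sigma_i}$, $f_i^2=v^{\sigma_i}$, $h_i^2=u^2=v^2=1$; $[g_i,g_j]=u^{\kappa_{ij}}$, $[f_i,f_j]=v^{\kappa_{ij}}$; $[g_i,f_j]=(uv)^{\kappa_{ij}}\prod_{k=1}^n h_k^{\alpha_{ijk}}$; $[g_i,h_j]=u^{\delta_{ij}}$, $[f_i,h_j]=v^{\delta_{ij}}$; $[h_i,h_j]=[g_i,u]=[f_i,u]=[h_i,u]=[g_i,v]=[f_i,v]=[h_i,v]=1$. Then the assignments $\sigma: g_i\mapsto f_i,\ f_i\mapsto g_i,\ h_i\mapsto h_i,\ u\mapsto v,\ v\mapsto u$ and $\rho: g_i\mapsto f_i,\ f_i\mapsto (g_if_i)^{-1},\ h_i\mapsto h_i,\ u\mapsto v,\ v\mapsto uv$ extend to automorphisms of $G$. Moreover $\sigma^2=\rho^3=(\sigma\rho)^2=\mathrm{id}$, so $S=\langle\sigma,\rho\rangle$ is isomorphic to the symmetric group $S_3$.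
   Context: A symplectic cubic space is a vector space $V$ over $\mathbb F_2$ with maps $\sigma:V\to\mathbb F_2$, $\kappa:V\times V\to\mathbb F_2$, $\alpha:V\times V\times V\to\mathbb F_2$ satisfying $\sigma(x+y)=\sigma(x)+\sigma(y)+\kappa(x,y)$, $\kappa(x+y,z)=\kappa(x,z)+\kappa(y,z)+\alpha(x,y,z)$, $\alpha(x+y,z,t)=\alpha(x,z,t)+\alpha(y,z,t)$. Exponents in $\mathbb F_2$ are read as $0$ or $1$; $[a,b]=a^{-1}b^{-1}ab$; $\delta_{ij}$ is the Kronecker delta. *)

(* Defs.v *)
From HB Require Import structures.
From mathcomp Require Import all_boot all_order all_algebra all_fingroup.
Set Implicit Arguments. Unset Strict Implicit. Unset Printing Implicit Defensive.
Import GRing.Theory.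

Definition ex (c : 'F_2) : nat := nat_of_ord c.

Definition symplectic_cubic (V : vectType 'F_2) (sg : V -> 'F_2)
    (ka : V -> V -> 'F_2) (al : V -> V -> V -> 'F_2) : Prop :=
  [/\ (forall x y, sg (x + y) = sg x + sg y + ka x y)%R,
      (forall x y z, ka (x + y) z = ka x z + ka y z + al x y z)%R &
      (forall x y z t, al (x + y) z t = al x z t + al y z t)%R].

Local Open Scope group_scope.

Definition G_rels (gT : finGroupType) (n : nat) (s : 'I_n -> 'F_2)
    (k : 'I_n -> 'I_n -> 'F_2) (a : 'I_n -> 'I_n -> 'I_n -> 'F_2)
    (g f h : 'I_n -> gT) (u v : gT) : Prop :=
  [/\ (forall i, g i ^+ 2 = u ^+ ex (s i)) /\ (forall i, f i ^+ 2 = v ^+ ex (s i)),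
      (forall i, h i ^+ 2 = 1) /\ u ^+ 2 = 1 /\ v ^+ 2 = 1,
      (forall i j, [~ g i, g j] = u ^+ ex (k i j)) /\
      (forall i j, [~ f i, f j] = v ^+ ex (k i j)) /\
      (forall i j, [~ g i, f j] = (u * v) ^+ ex (k i j) * \prod_(l < n) h l ^+ ex (a i j l)),
      (forall i j, [~ g i, h j] = u ^+ (i == j)) /\
      (forall i j, [~ f i, h j] = v ^+ (i == j)) &
      (forall i j, [~ h i, h j] = 1) /\
      (forall i, [~ g i, u] = 1 /\ [~ f i, u] = 1 /\ [~ h i, u] = 1 /\
                 [~ g i, v] = 1 /\ [~ f i, v] = 1 /\ [~ h i, v] = 1)].

Definition G_gens (gT : finGroupType) (n : nat) (g f h : 'I_n -> gT) (u v : gT)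
  : {set gT} :=
  [set g i | i : 'I_n] :|: [set f i | i : 'I_n] :|: [set h i | i : 'I_n] :|: [set u; v].

(* G is the group presented by the generators g_i, f_i, h_i, u, v and the
   relations G_rels: the relations hold, G is generated by these elements,
   and any family of elements satisfying the relations in any (finite)
   group is the image of the generators under a morphism defined on G. *)
Definition presented_G (gT : finGroupType) (G : {group gT}) (n : nat)
    (s : 'I_n -> 'F_2) (k : 'I_n -> 'I_n -> 'F_2) (a : 'I_n -> 'I_n -> 'I_n -> 'F_2)
    (g f h : 'I_n -> gT) (u v : gT) : Prop :=
  [/\ G_rels s k a g f h u v,
      G = <<G_gens g f h u v>> :> {set gT} &
      forall (hT : finGroupType) (g' f' h' : 'I_n -> hT) (u' v' : hT),
        G_rels s k a g' f' h' u' v' ->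
        exists phi : {morphism G >-> hT},
          [/\ forall i, phi (g i) = g' i, forall i, phi (f i) = f' i,
              forall i, phi (h i) = h' i, phi u = u' & phi v = v']].

(* Main.v *)
Require Import Defs.
From HB Require Import structures.
From mathcomp Require Import all_boot all_order all_algebra all_fingroup.
From mathcomp Require Import all_solvable.
Import GRing.Theory.
Section F2.
Local Open Scope ring_scope.

Lemma F2_cases (c : 'F_2) : c = 0 \/ c = 1.
Proof. case: c => [[|[|m]] Hm]; [left|right|by []]; exact/val_inj. Qed.

Lemma F2_dbl (c : 'F_2) : c + c = 0.
Proof. by case: (F2_cases c) => ->; apply/val_inj. Qed.

Lemma V_dbl (V : vectType 'F_2) (x : V) : x + x = 0.
Proof. by rewrite -{1 2}[x]scale1r -scalerDl (F2_dbl 1) scale0r. Qed.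

Section SC.
Variables (V : vectType 'F_2) (sg : V -> 'F_2) (ka : V -> V -> 'F_2) (al : V -> V -> V -> 'F_2).
Hypothesis H : symplectic_cubic sg ka al.

Lemma F2_cancel (a b : 'F_2) : a + b = 0 -> a = b.
Proof. by case: (F2_cases a) => ->; case: (F2_cases b) => ->; move/(congr1 val). Qed.

Lemma al0 z t : al 0 z t = 0.
Proof. case: H => _ _ H3; have := H3 0 0 z t; rewrite addr0 => E.
by move: E; case: (F2_cases (al 0 z t)) => ->. Qed.

Lemma ka0 z : ka 0 z = 0.
Proof. case: H => _ H2 _; have := H2 0 0 z; rewrite addr0 al0 addr0 => E.
by move: E; case: (F2_cases (ka 0 z)) => ->. Qed.

Lemma ka_sg x y : ka x y = sg (x + y) + sg x + sg y.
Proof. case: H => H1 _ _; rewrite H1.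
by case: (F2_cases (sg x)) => ->; case: (F2_cases (sg y)) => ->; case: (F2_cases (ka x y)) => ->; apply/val_inj. Qed.

Lemma al_ka x y z : al x y z = ka (x + y) z + ka x z + ka y z.
Proof. case: H => _ H2 _; rewrite H2.
by case: (F2_cases (ka x z)) => ->; case: (F2_cases (ka y z)) => ->; case: (F2_cases (al x y z)) => ->; apply/val_inj. Qed.

Lemma sg0 : sg 0 = 0.
Proof. have E := ka_sg 0 0; rewrite ka0 addr0 in E; move: E.
by case: (F2_cases (sg 0)) => -> // /(congr1 val). Qed.

Lemma ka_sym x y : ka x y = ka y x.
Proof. rewrite !ka_sg (addrC y x); move: (sg (x+y)) (sg x) (sg y) => A B C.
by case: (F2_cases A) => ->; case: (F2_cases B) => ->; case: (F2_cases C) => ->; apply/val_inj. Qed.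

Lemma ka_diag x : ka x x = 0.
Proof. rewrite ka_sg V_dbl sg0 add0r; exact: F2_dbl. Qed.

Lemma al_sym x y z : al x y z = al y x z.
Proof. rewrite !al_ka (addrC y x); move: (ka (x+y) z) (ka x z) (ka y z) => A B C.
by case: (F2_cases A) => ->; case: (F2_cases B) => ->; case: (F2_cases C) => ->; apply/val_inj. Qed.

Lemma al_xxz x z : al x x z = 0.
Proof. rewrite al_ka V_dbl ka0 add0r; exact: F2_dbl. Qed.

Lemma al_xyx x y : al x y x = 0.
Proof.
rewrite al_ka !ka_sg (@V_dbl V x) sg0 (addrC x y) -(addrA y x x) (@V_dbl V x) addr0.
move: (sg x) (sg y) (sg (y + x)) => A B C.
by case: (F2_cases A) => ->; case: (F2_cases B) => ->; case: (F2_cases C) => ->; apply/val_inj.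
Qed.

Lemma al_xyy x y : al x y y = 0.
Proof. by rewrite al_sym al_xyx. Qed.
End SC.
End F2.

Local Open Scope group_scope.

Lemma cfix (gT : finGroupType) (x y : gT) : commute x y -> x ^ y = x.
Proof. by move=> c; rewrite conjgE ?mulgA -?mulgA c mulKg. Qed.

Lemma inv_inv2 (gT : finGroupType) (x : gT) : x ^+ 2 = 1 -> x^-1 = x.
Proof. by move=> x2; apply/eqP; rewrite eq_invg_mul -{2}(expg1 x) -expgS x2. Qed.

Lemma inv_exp2 (gT : finGroupType) (x : gT) e : x ^+ 2 = 1 -> (x ^+ e)^-1 = x ^+ e.
Proof. by move=> x2; rewrite -expVgn inv_inv2. Qed.

Lemma sq_cancel (gT : finGroupType) (x : gT) e : x ^+ 2 = 1 -> x ^+ e * x ^+ e = 1.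
Proof. by move=> x2; rewrite -expgD addnn -mul2n expgM x2 expg1n. Qed.

Lemma commuteR (gT : finGroupType) (z x y : gT) :
  commute z x -> commute z y -> commute z [~ x, y].
Proof.
move=> zx zy; rewrite /commg /conjg.
apply: commuteM; first exact: commuteV.
apply: commuteM; first exact: commuteV.
exact: commuteM.
Qed.

Lemma commP1 (gT : finGroupType) (x y : gT) : [~ x, y] = 1 -> commute x y.
Proof. by move=> e; apply/commgP/eqP. Qed.

Lemma comm1P (gT : finGroupType) (x y : gT) : commute x y -> [~ x, y] = 1.
Proof. by move/commgP/eqP. Qed.

Lemma commuteMl (gT : finGroupType) (x y z : gT) : commute x z -> commute y z -> commute (x * y) z.
Proof. by move=> a b; apply: commute_sym; apply: commuteM; apply: commute_sym. Qed.
Lemma commuteXl (gT : finGroupType) (x z : gT) e : commute x z -> commute (x ^+ e) z.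
Proof. by move=> a; apply: commute_sym; apply: commuteX; apply: commute_sym. Qed.
Lemma commuteVl (gT : finGroupType) (x z : gT) : commute x z -> commute (x^-1) z.
Proof. by move=> a; apply: commute_sym; apply: commuteV; apply: commute_sym. Qed.

Section Grp.
Variables (gT : finGroupType) (n : nat) (s : 'I_n -> 'F_2) (k : 'I_n -> 'I_n -> 'F_2)
  (a : 'I_n -> 'I_n -> 'I_n -> 'F_2) (g f h : 'I_n -> gT) (u v : gT).
Hypothesis R : G_rels s k a g f h u v.
Hypotheses (ksym : forall i j, k i j = k j i) (kdiag : forall i, k i i = 0%R)
  (asym : forall i j l, a i j l = a j i l) (aii : forall i l, a i i l = 0%R)
  (aiji : forall i j, a i j i = 0%R) (aijj : forall i j, a i j j = 0%R).
Variable i0 : 'I_n.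

Let gsq i : g i ^+ 2 = u ^+ ex (s i). Proof. by case: R => [[]]. Qed.
Let fsq i : f i ^+ 2 = v ^+ ex (s i). Proof. by case: R => [[]]. Qed.
Let hsq i : h i ^+ 2 = 1. Proof. by case: R => _ [] . Qed.
Let usq : u ^+ 2 = 1. Proof. by case: R => _ [_ []]. Qed.
Let vsq : v ^+ 2 = 1. Proof. by case: R => _ [_ []]. Qed.
Let cgg i j : [~ g i, g j] = u ^+ ex (k i j). Proof. by case: R => _ _ []. Qed.
Let cff i j : [~ f i, f j] = v ^+ ex (k i j). Proof. by case: R => _ _ [_ []]. Qed.
Let cgf i j : [~ g i, f j] = (u * v) ^+ ex (k i j) * \prod_(l < n) h l ^+ ex (a i j l).
Proof. by case: R => _ _ [_ []]. Qed.
Let cgh i j : [~ g i, h j] = u ^+ (i == j). Proof. by case: R => _ _ _ []. Qed.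
Let cfh i j : [~ f i, h j] = v ^+ (i == j). Proof. by case: R => _ _ _ []. Qed.
Let chh i j : commute (h i) (h j). Proof. by apply: commP1; case: R => _ _ _ _ []. Qed.
Let E6 i := let: And5 _ _ _ _ (conj _ e) := R in e i.
Let gu i : commute (g i) u. Proof. by apply: commP1; case: (E6 i). Qed.
Let fu i : commute (f i) u. Proof. by apply: commP1; case: (E6 i) => _ []. Qed.
Let hu i : commute (h i) u. Proof. by apply: commP1; case: (E6 i) => _ [_ []]. Qed.
Let gv i : commute (g i) v. Proof. by apply: commP1; case: (E6 i) => _ [_ [_ []]]. Qed.
Let fv i : commute (f i) v. Proof. by apply: commP1; case: (E6 i) => _ [_ [_ [_ []]]]. Qed.
Let hv i : commute (h i) v. Proof. by apply: commP1; case: (E6 i) => _ [_ [_ [_ []]]]. Qed.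

Let uv : commute u v.
Proof.
have <- : [~ g i0, h i0] = u by rewrite cgh eqxx expg1.
by apply: commute_sym; apply: commuteR; apply: commute_sym.
Qed.


Let P i j := \prod_(l < n) h l ^+ ex (a i j l).

Let P_comm x i j : (forall l, commute x (h l ^+ ex (a i j l))) -> commute x (P i j).
Proof. move=> H; rewrite /P; elim/big_rec: _ => [|l y _ Hy]; [exact: commute1 | exact: commuteM]. Qed.

Let ex0 : ex 0%R = 0%N. Proof. by []. Qed.

Let Pg i j m : commute (g m) (P i j) /\ commute (f m) (P i j) \/ a i j m <> 0%R.
Proof. Abort.

Let Pgm i j m : a i j m = 0%R -> commute (g m) (P i j).
Proof.
move=> am; apply: P_comm => l; case: (eqVneq l m) => [->|lm]; first by rewrite am ex0 expg0; exact: commute1.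
by apply: commuteX; apply: commP1; rewrite cgh eq_sym (negbTE lm) expg0.
Qed.

Let Pfm i j m : a i j m = 0%R -> commute (f m) (P i j).
Proof.
move=> am; apply: P_comm => l; case: (eqVneq l m) => [->|lm]; first by rewrite am ex0 expg0; exact: commute1.
by apply: commuteX; apply: commP1; rewrite cfh eq_sym (negbTE lm) expg0.
Qed.

Let Pu i j : commute u (P i j).
Proof. by apply: P_comm => l; apply: commuteX; apply: commute_sym. Qed.
Let Pv i j : commute v (P i j).
Proof. by apply: P_comm => l; apply: commuteX; apply: commute_sym. Qed.

Let Pinv i j : (P i j)^-1 = P i j.
Proof.
suff [] : (P i j)^-1 = P i j /\ forall m, commute (P i j) (h m) by [].
rewrite /P; elim/big_rec: _ => [|l y _ [Hy1 Hy2]]; first by split; [exact: invg1 | move=> m; apply: commute_sym; exact: commute1].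
split; last by move=> m; apply: commute_sym; apply: commuteM; [apply: commuteX; apply: chh | apply: commute_sym].
rewrite invMg Hy1 inv_exp2 ?hsq //.
by apply: commuteX; apply: Hy2.
Qed.

Let PP i j : P i j * P i j = 1.
Proof. by rewrite -{1}Pinv mulVg. Qed.

Let Psym i j : P i j = P j i.
Proof. by apply: eq_bigr => l _; rewrite asym. Qed.

Let Pdiag i : P i i = 1.
Proof. by apply: big1 => l _; rewrite aii ex0 expg0. Qed.

Let uvsq : (u * v) ^+ 2 = 1.
Proof. by rewrite expgMn // usq vsq mulg1. Qed.

Let gf i : commute (g i) (f i).
Proof. by apply: commP1; rewrite cgf kdiag ex0 expg0 mul1g -/(P i i) Pdiag. Qed.

Let cfg i j : [~ f i, g j] = (v * u) ^+ ex (k i j) * P i j.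
Proof.
rewrite -invg_comm cgf invMg inv_exp2 // -/(P j i) -Psym Pinv ksym -uv.
by apply: commuteX; apply: commute_sym; apply: commuteMl; [apply: Pu | apply: Pv].
Qed.

Lemma sigma_rels : G_rels s k a f g h v u.
Proof.
split.
- by split.
- by split.
- split; first exact: cff. split; first exact: cgg. move=> i j; rewrite cfg //.
- by split.
split; first by move=> i j; apply: comm1P.
move=> i; do !split; apply: comm1P; first [apply: gu | apply: fu | apply: hu | apply: gv | apply: fv | apply: hv].
Qed.

Let wu i : commute (g i * f i) u. Proof. exact: commuteMl. Qed.
Let wv i : commute (g i * f i) v. Proof. exact: commuteMl. Qed.
Let wc i e : commute (g i * f i) ((u * v) ^+ e).
Proof. by apply: commuteX; apply: commuteM. Qed.
Let wP i j : commute (g j * f j) (P i j).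
Proof. by apply: commuteMl; [apply: Pgm | apply: Pfm]. Qed.

Let vuv : v * (u * v) = u.
Proof. by rewrite mulgA -uv -mulgA -{2}(expg1 v) -expgS vsq mulg1. Qed.

Let cfw i j : [~ f i, g j * f j] = u ^+ ex (k i j) * P i j.
Proof.
rewrite commgMJ cff cfg conjMg !cfix; first last.
- by apply: commuteXl; apply: commuteMl; apply: commute_sym.
- by apply: commute_sym; apply: Pfm.
by rewrite (expgMn _ (commute_sym uv)) mulgA mulgA sq_cancel // mul1g.
Qed.

Let cgw i j : [~ g i, g j * f j] = (u * v) ^+ ex (k i j) * P i j * u ^+ ex (k i j).
Proof.
rewrite commgMJ cgf cgg cfix //.
by apply: commuteXl; apply: commute_sym.
Qed.

Let cww i j : [~ g i * f i, g j * f j] = (u * v) ^+ ex (k i j).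
Proof.
rewrite commMgJ cgw cfw !conjMg !cfix.
all: try by apply: commute_sym; apply: Pfm.
all: try by apply: commuteXl; apply: commuteMl; apply: commute_sym.
all: try by apply: commuteXl; apply: commute_sym.
rewrite -!mulgA (mulgA (u ^+ _)) sq_cancel // mul1g.
by rewrite -/(P i j) PP mulg1.
Qed.

Lemma rho_rels : G_rels s k a f (fun i => (g i * f i)^-1) h v (u * v).
Proof.
split.
- split=> // i.
  by rewrite expVgn expgMn // gsq fsq -(expgMn _ uv) inv_exp2.
- by split.
- split; first exact: cff.
  split=> i j.
    have c1 : [~ g i * f i, (g j * f j)^-1] = ((u * v) ^+ ex (k i j))^-1.
      by rewrite commgV cww.
    rewrite commVg c1 ?invgK //.
    by apply: commuteV; apply: wc.
  rewrite /= commgV ?cfw; last by apply: commuteM; [apply: commuteX; apply: wu | apply: wP].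
  rewrite invMg -/(P i j) Pinv vuv inv_exp2 //.
  by apply: commuteX; apply: commute_sym; apply: Pu.
- split; first exact: cfh.
  move=> i j.
  have c2 : [~ g i * f i, h j] = (u * v) ^+ (i == j).
    by rewrite commMgJ cgh cfh cfix -?expgMn //; apply: commuteXl; apply: commute_sym.
  by rewrite commVg c2 ?inv_exp2 //.
split; first by move=> i j; apply: comm1P.
move=> i; do !split; apply: comm1P.
- exact: fv.
- by apply: commuteVl.
- exact: hv.
- exact: commuteM.
- by apply: commuteVl; apply: commuteM.
- exact: commuteM.
Qed.
Lemma uv_comm : commute u v. Proof. exact: uv. Qed.
Lemma gf_comm i : commute (g i) (f i). Proof. exact: gf. Qed.
End Grp.

Lemma ord_p (gT : finGroupType) (x : gT) p : prime p -> x ^+ p = 1 -> x != 1 -> #[x] = p.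
Proof.
move=> pp xp x1; apply/(prime_nt_dvdP pp); first by rewrite order_eq1.
by rewrite order_dvdn xp.
Qed.

Lemma s3_core (gT : finGroupType) (x y : gT) :
  x ^+ 2 = 1 -> y ^+ 3 = 1 -> (x * y) ^+ 2 = 1 -> y != 1 ->
  #|<<[set x; y]>>| = 6 /\ <<[set x; y]>> \isog 'D_6.
Proof.
move=> x2 y3 xy2 y1.
have y2ne : y ^+ 2 != 1.
  apply: contra y1 => /eqP y2; apply/eqP.
  by rewrite -[y]mulg1 -{1}y3 (expgS y 2) y2 !mulg1.
have x1 : x != 1.
  by apply: contra y2ne => /eqP x1; rewrite x1 mul1g in xy2; rewrite xy2.
have xy1 : x * y != 1.
  apply: contra y2ne => /eqP e; have ey : y = x^-1 by rewrite -[y]mul1g -(mulVg x) -mulgA e mulg1.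
  by rewrite ey expVgn x2 invg1.
have ox : #[x] = 2 by apply: ord_p.
have oy : #[y] = 3 by apply: ord_p.
have oxy : #[x * y] = 2 by apply: ord_p.
have ne : x != x * y by apply: contra y1 => /eqP e; apply/eqP; apply: (mulgI x); rewrite mulg1 -e.
have eqX : <<[set x; x * y]>> = <<[set x; y]>>.
  apply/eqP; rewrite eqEsubset !gen_subG !subUset !sub1set.
  have a1 : x \in <<[set x; y]>> := mem_gen (set21 _ _).
  have a2 : y \in <<[set x; y]>> := mem_gen (set22 _ _).
  have b1 : x \in <<[set x; x * y]>> := mem_gen (set21 _ _).
  have b2 : x * y \in <<[set x; x * y]>> := mem_gen (set22 _ _).
  rewrite a1 b1 groupM //=.
  by rewrite -{1}(mulKg x y) groupM ?groupV.
have cardX : #|<<[set x; y]>>| = 6.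
  have nYX : <[x]> \subset 'N(<[y]>).
    rewrite cycle_subG; apply/normP; rewrite -cycleJ.
    have -> : y ^ x = y^-1.
      apply/eqP; rewrite eq_sym eq_invg_mul conjgE.
      have xinv : x^-1 = x by apply/eqP; rewrite eq_invg_mul -{2}(expg1 x) -expgS x2.
      rewrite xinv !mulgA.
      have e : x * y * x * y = 1 by rewrite -xy2 expgS expg1 !mulgA.
      have -> : y * x * y * x = x^-1 * (x * y * x * y) * x by rewrite !mulgA mulVg mul1g.
      by rewrite e mulg1 mulVg.
    by rewrite cycleV.
  have -> : <<[set x; y]>> = (<[y]> <*> <[x]>)%G :> {set gT}.
    by rewrite /= joing_idl joing_idr setUC.
  rewrite /= norm_joinEr // TI_cardMg; last by apply: coprime_TIg; rewrite -!orderE ox oy.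
  by rewrite -!orderE ox oy.
split=> //.
have := involutions_gen_dihedral ox oxy ne; rewrite eqX cardX.
done.
Qed.

Definition o0 : 'I_3 := @Ordinal 3 0 isT.
Definition o1 : 'I_3 := @Ordinal 3 1 isT.
Definition o2 : 'I_3 := @Ordinal 3 2 isT.
Definition x3 : 'S_3 := tperm o0 o1.
Definition y3 : 'S_3 := tperm o0 o1 * tperm o1 o2.
Lemma y3_3 : y3 ^+ 3 = 1.
Proof. apply/permP => i; rewrite permX /= ?permM perm1 !permE.
by case: i => [[|[|[|//]]] ?]; apply/val_inj. Qed.
Lemma xy3_2 : (x3 * y3) ^+ 2 = 1.
Proof. apply/permP => i; rewrite permX /= ?permM perm1 !permE.
by case: i => [[|[|[|//]]] ?]; apply/val_inj. Qed.
Lemma x3_2 : x3 ^+ 2 = 1.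
Proof. apply/permP => i; rewrite permX /= ?permM perm1 !permE.
by case: i => [[|[|[|//]]] ?]; apply/val_inj. Qed.
Lemma y3_1 : y3 != 1.
Proof. apply/eqP => /permP /(_ o0); rewrite permM perm1 !permE /=. by move/(congr1 val). Qed.

Lemma fix_gen (gT : finGroupType) (G : {group gT}) (A : {set gT}) (F : gT -> gT) :
  G = <<A>> :> {set gT} -> {in G &, {morph F : x y / x * y}} ->
  (forall x, x \in A -> F x = x) -> {in G, F =1 id}.
Proof.
move=> GA Fm FA.
have F1 : F 1 = 1.
  by apply: (mulgI (F 1)); rewrite -Fm ?group1 // !mulg1.
have gK : group_set [set x in G | F x == x].
  apply/group_setP; split; first by rewrite inE group1 F1 eqxx.
  move=> x y; rewrite !inE => /andP[Gx /eqP Fx] /andP[Gy /eqP Fy].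
  by rewrite groupM // Fm // Fx Fy eqxx.
have : G \subset Group gK.
  rewrite {1}GA gen_subG; apply/subsetP => x Ax; rewrite inE FA // eqxx andbT.
  by rewrite GA mem_gen.
by move/subsetP => sub x /sub; rewrite inE => /andP[_ /eqP].
Qed.

Lemma mk_aut (gT : finGroupType) (G : {group gT}) (A : {set gT})
    (phi : {morphism G >-> gT}) (m : nat) :
  G = <<A>> :> {set gT} -> (forall x, x \in A -> phi x \in G) ->
  (forall x, x \in A -> iter m.+1 phi x = x) ->
  exists p : {perm gT}, [/\ p \in Aut G, {in G, p =1 phi} & p ^+ m.+1 = 1].
Proof.
move=> GA phiA iterA.
have AG : A \subset G by rewrite GA subset_gen.
have phiG : {in G, forall x, phi x \in G}.
  have : G \subset phi @*^-1 G.
    by rewrite {1}GA gen_subG; apply/subsetP => x Ax; apply/morphpreP; split; [apply: (subsetP AG) | apply: phiA].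
  by move/subsetP => sub x /sub /morphpreP[].
have itG j : {in G, forall x, iter j phi x \in G}.
  by elim: j => [|j IH] x Gx //=; apply: phiG; apply: IH.
have itM j : {in G &, {morph iter j phi : x y / x * y}}.
  elim: j => [|j IH] x y Gx Gy //=; rewrite IH // morphM //; exact: itG.
have itid := @fix_gen _ G A _ GA (itM m.+1) iterA.
have inj : 'injm phi.
  apply/injmP => x y Gx Gy e.
  have := itid x Gx; have := itid y Gy; rewrite !iterSr e /= => E1 E2.
  by rewrite -E2 E1.
have im : phi @* G = G.
  apply/eqP; rewrite eqEcard card_injm // leqnn andbT.
  by apply/subsetP => _ /morphimP[x _ Gx ->]; apply: phiG.
exists (aut inj im); split; first exact: Aut_aut.
  exact: autE.
apply: (eq_Aut (groupX _ (Aut_aut inj im)) (group1 _)) => x Gx.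
rewrite permX perm1.
have -> : iter m.+1 (aut inj im) x = iter m.+1 phi x.
  elim: (m.+1) => [|j IH] //=; rewrite IH autE //; exact: itG.
exact: itid.
Qed.

Lemma S3_D6 : [set: 'S_3] \isog 'D_6.
Proof.
have [c i] := @s3_core _ x3 y3 x3_2 y3_3 xy3_2 y3_1.
have -> : [set: 'S_3] = <<[set x3; y3]>>.
  by apply/eqP; rewrite eq_sym eqEcard subsetT cardsT card_Sn c.
exact: i.
Qed.

Lemma gens_P (gT : finGroupType) n (g f h : 'I_n -> gT) (u v : gT) (P : gT -> Prop) :
  (forall i, P (g i)) -> (forall i, P (f i)) -> (forall i, P (h i)) -> P u -> P v ->
  forall x, x \in G_gens g f h u v -> P x.
Proof.
move=> Pg Pf Ph Pu Pv x; rewrite /G_gens !inE -!orbA.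
case/orP => [/imsetP[i _ ->] //|]; case/orP => [/imsetP[i _ ->] //|].
case/orP => [/imsetP[i _ ->] //|]. by case/orP => /eqP ->.
Qed.

Lemma gens_mem (gT : finGroupType) n (g f h : 'I_n -> gT) (u v : gT) :
  [/\ forall i, g i \in G_gens g f h u v, forall i, f i \in G_gens g f h u v,
      forall i, h i \in G_gens g f h u v, u \in G_gens g f h u v & v \in G_gens g f h u v].
Proof.
rewrite /G_gens; split=> [i|i|i||]; rewrite !inE ?eqxx ?orbT //.
- by rewrite imset_f.
- by rewrite imset_f ?orbT.
- by rewrite imset_f ?orbT.
Qed.

Local Close Scope group_scope.

Theorem mainTheorem5 (V : vectType 'F_2) (sg : V -> 'F_2)
    (ka : V -> V -> 'F_2) (al : V -> V -> V -> 'F_2)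
    (n : nat) (b : n.-tuple V)
    (gT : finGroupType) (G : {group gT}) (g f h : 'I_n -> gT) (u v : gT) :
  symplectic_cubic sg ka al ->
  basis_of fullv b ->
  presented_G G (fun i => sg (tnth b i)) (fun i j => ka (tnth b i) (tnth b j))
    (fun i j l => al (tnth b i) (tnth b j) (tnth b l)) g f h u v ->
  exists s r : {perm gT},
    [/\ s \in Aut G /\ r \in Aut G,
        [/\ forall i, s (g i) = f i, forall i, s (f i) = g i,
            forall i, s (h i) = h i, s u = v & s v = u],
        [/\ forall i, r (g i) = f i, forall i, r (f i) = ((g i * f i)^-1)%g,
            forall i, r (h i) = h i, r u = v & r v = (u * v)%g],
        [/\ (s ^+ 2 = 1)%g, (r ^+ 3 = 1)%g & ((s * r) ^+ 2 = 1)%g] &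
        (<<[set s; r]>> \isog [set: 'S_3])%g].
Proof.
move=> sc _ [rels GA univ].
have [mg mf mh mu mv] := @gens_mem _ _ g f h u v.
have Gg i : g i \in G by rewrite GA mem_gen.
have Gf i : f i \in G by rewrite GA mem_gen.
have Gh i : h i \in G by rewrite GA mem_gen.
have Gu : u \in G by rewrite GA mem_gen.
have Gv : v \in G by rewrite GA mem_gen.
case: (posnP n) => [n0 | npos].
  exfalso.
  have I0 (i : 'I_n) : False by have := ltn_ord i; rewrite {2}n0.
  pose N := #|G|.+1.
  have N1 : (1 < N)%N by rewrite ltnS cardG_gt0.
  have inj_u : injective (fun x : 'Z_N => - x)%R by exact: oppr_inj.
  have inj_v : injective (fun x : 'Z_N => 1 - x)%R.
    by move=> x y /= e; apply: oppr_inj; apply: (addrI 1%R).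
  pose u' := perm inj_u. pose v' := perm inj_v.
  have u2 : (u' ^+ 2 = 1)%g by apply/permP => x; rewrite permX perm1 /= !permE /= opprK.
  have v2 : (v' ^+ 2 = 1)%g by apply/permP => x; rewrite permX perm1 /= !permE /= opprB addrC subrK.
  have Hd : G_rels (gT := {perm 'Z_N}) (fun i => sg (tnth b i))
    (fun i j => ka (tnth b i) (tnth b j)) (fun i j l => al (tnth b i) (tnth b j) (tnth b l))
    (fun _ => 1%g) (fun _ => 1%g) (fun _ => 1%g) u' v'.
    by do !split; try (move=> i; case: (I0 i)).
  have [phi [_ _ _ pu pv]] := univ _ _ _ _ _ _ Hd.
  have uvG : (u * v \in G)%g by rewrite groupM.
  have tr j x : (((u' * v') ^+ j)%g x = x + j%:R)%R.
    elim: j x => [|j IH] x; first by rewrite expg0 perm1 addr0.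
    by rewrite expgSr permM IH permM !permE /= opprK mulrS addrCA.
  have : ((u' * v') ^+ #[u * v]%g)%g = 1%g by rewrite -pu -pv -morphM // -morphX // expg_order morph1.
  move/permP/(_ 0%R); rewrite tr perm1 add0r => /(congr1 val); rewrite /= val_Zp_nat // => /eqP H.
  have dv : (N %| #[u * v]%g)%N by rewrite /dvdn H.
  have := dvdn_leq (order_gt0 _) dv.
  have := dvdn_leq (cardG_gt0 G) (order_dvdG uvG).
  by move=> a1 a2; have := leq_trans a2 a1; rewrite ltnn.
pose i0 : 'I_n := Ordinal npos.
have ks i j := @ka_sym _ _ _ _ sc (tnth b i) (tnth b j).
have kd i := @ka_diag _ _ _ _ sc (tnth b i).
have as_ i j l := @al_sym _ _ _ _ sc (tnth b i) (tnth b j) (tnth b l).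
have aii i l := @al_xxz _ _ _ _ sc (tnth b i) (tnth b l).
have aiji i j := @al_xyx _ _ _ _ sc (tnth b i) (tnth b j).
have aijj i j := @al_xyy _ _ _ _ sc (tnth b i) (tnth b j).
have Hs := @sigma_rels _ _ _ _ _ _ _ _ _ _ rels ks as_ i0.
have Hr := @rho_rels _ _ _ _ _ _ _ _ _ _ rels ks kd as_ aii aiji aijj i0.
have cuv := @uv_comm _ _ _ _ _ _ _ _ _ _ rels i0.
have cgf := @gf_comm _ _ _ _ _ _ _ _ _ _ rels kd aii.
have vsq : (v ^+ 2 = 1)%g by case: rels => _ [_ []].
have vv : (v * v = 1)%g by rewrite -{2}(expg1 v) -expgS vsq.
have [phs [phs_g phs_f phs_h phs_u phs_v]] := univ _ _ _ _ _ _ Hs.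
have [phr [phr_g phr_f phr_h phr_u phr_v]] := univ _ _ _ _ _ _ Hr.
have [s [sA sE s2]] : exists s : {perm gT}, [/\ s \in Aut G, {in G, s =1 phs} & (s ^+ 2 = 1)%g].
  apply: (@mk_aut _ G (G_gens g f h u v)) => //.
    apply: gens_P => [i|i|i||]; rewrite ?phs_g ?phs_f ?phs_h ?phs_u ?phs_v //.
  apply: gens_P => [i|i|i||] /=; rewrite ?phs_g ?phs_f ?phs_h ?phs_u ?phs_v //.
have [r [rA rE r3]] : exists r : {perm gT}, [/\ r \in Aut G, {in G, r =1 phr} & (r ^+ 3 = 1)%g].
  apply: (@mk_aut _ G (G_gens g f h u v)) => //.
    apply: gens_P => [i|i|i||]; rewrite ?phr_g ?phr_f ?phr_h ?phr_u ?phr_v ?groupV ?groupM //.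
  apply: gens_P => [i|i|i||] /=; rewrite ?phr_g ?phr_f ?phr_h ?phr_u ?phr_v //.
  - by rewrite morphV ?groupM // morphM // phr_g phr_f invMg invgK mulgK.
  - by rewrite morphV ?groupM // morphM // phr_g phr_f invMg invgK mulgK.
  - by rewrite morphM // phr_u phr_v mulgA -cuv -mulgA vv mulg1.
  - by rewrite morphM // phr_u phr_v mulgA -cuv -mulgA vv mulg1.
have Gw i : ((g i * f i)^-1 \in G)%g by rewrite groupV groupM.
have Gw' i : ((f i * g i)^-1 \in G)%g by rewrite groupV groupM.
have sr2 : ((s * r) ^+ 2 = 1)%g.
  have srA : ((s * r)^+2 \in Aut G)%g by rewrite groupX // groupM.
  apply: (eq_Aut srA (group1 _)) => x Gx; rewrite perm1.
  apply: (@fix_gen _ G (G_gens g f h u v)) => //.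
    by apply/morphicP; apply: Aut_morphic.
  apply: gens_P => [i|i|i||]; rewrite permX /= !permM.
  - rewrite (sE _ (Gg i)) phs_g (rE _ (Gf i)) phr_f (sE _ (Gw i)) morphV ?groupM // morphM //.
    rewrite phs_g phs_f (rE _ (Gw' i)) morphV ?groupM // morphM // phr_f phr_g.
    by rewrite invMg invgK (cgf i) mulKg.
  - by rewrite (sE _ (Gf i)) phs_f (rE _ (Gg i)) phr_g (sE _ (Gf i)) phs_f (rE _ (Gg i)) phr_g.
  - by rewrite (sE _ (Gh i)) phs_h (rE _ (Gh i)) phr_h (sE _ (Gh i)) phs_h (rE _ (Gh i)) phr_h.
  - rewrite (sE _ Gu) phs_u (rE _ Gv) phr_v (sE _ (groupM Gu Gv)) morphM // phs_u phs_v.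
    by rewrite (rE _ (groupM Gv Gu)) morphM // phr_u phr_v -mulgA vv mulg1.
  - by rewrite (sE _ Gv) phs_v (rE _ Gu) phr_u (sE _ Gv) phs_v (rE _ Gu) phr_u.
have gf_ne : g i0 != f i0.
  apply/eqP => e.
  pose t : {perm bool} := tperm true false.
  have t2 : (t ^+ 2 = 1)%g by rewrite expgS expg1 tperm2.
  have Ht : G_rels (gT := {perm bool}) (fun i => sg (tnth b i))
    (fun i j => ka (tnth b i) (tnth b j)) (fun i j l => al (tnth b i) (tnth b j) (tnth b l))
    (fun _ => t) (fun _ => 1%g) (fun _ => 1%g) 1%g 1%g.
    do !split=> * /=; rewrite ?expg1n ?t2 ?commgg ?commg1 ?comm1g ?mul1g ?big1 ?expg1n ?mul1g //.
    by move=> *; rewrite expg1n.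
  have [phi [p1 p2 _ _ _]] := univ _ _ _ _ _ _ Ht.
  have : phi (g i0) = phi (f i0) by rewrite e.
  rewrite p1 p2 => /permP /(_ true); rewrite perm1 tpermL.
  done.
have r1 : r != 1%g.
  apply/eqP => r1; move: gf_ne; rewrite -(phr_g i0) -(rE _ (Gg i0)) r1 perm1 eqxx.
  done.
exists s, r; split.
- by split.
- split=> [i|i|i||].
  + by rewrite (sE _ (Gg i)) phs_g.
  + by rewrite (sE _ (Gf i)) phs_f.
  + by rewrite (sE _ (Gh i)) phs_h.
  + by rewrite (sE _ Gu) phs_u.
  + by rewrite (sE _ Gv) phs_v.
- split=> [i|i|i||].
  + by rewrite (rE _ (Gg i)) phr_g.
  + by rewrite (rE _ (Gf i)) phr_f.
  + by rewrite (rE _ (Gh i)) phr_h.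
  + by rewrite (rE _ Gu) phr_u.
  + by rewrite (rE _ Gv) phr_v.
- by split.
have [_ iso] := @s3_core _ s r s2 r3 sr2 r1.
apply: (isog_trans iso).
by rewrite isog_sym S3_D6.
Qed.
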